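(* For every $0<a<2$, as $\theta\to\infty$, \[f'''(\theta)=O\big(e^{-a\theta}\big)\qquad\text{and}\qquad j''(\theta)=O\big(e^{-a\theta}\big).\]
   Context: Define $\lambda:[0,\infty)\to(0,1/4]$ by $\lambda(0)=1/4$ and, for $\theta>0$, $\lambda(\theta)$ is the unique $\lambda\in(0,1/4)$ with $-1+\frac{\operatorname{artanh}(\sqrt{1-4\lambda})}{\sqrt{1-4\lambda}}=\theta$. For $\theta>0$ set $f(\theta)=-\ln\lambda(\theta)-2\theta-\theta\ln\big(1-4\lambda(\theta)\big)$ and $j(\theta)=-\tfrac12\ln\big(1-4(\theta+1)\lambda(\theta)\big)+\tfrac12\ln 2$. *)

(* Defs.v *)
From Stdlib Require Import Reals Lra ClassicalEpsilon.
From Coquelicot Require Import Coquelicot.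
Open Scope R_scope.

Definition artanh (x : R) : R := / 2 * ln ((1 + x) / (1 - x)).

Definition theta_of_lambda (l : R) : R :=
  -1 + artanh (sqrt (1 - 4 * l)) / sqrt (1 - 4 * l).

(* lambda(0) = 1/4; for theta > 0, lambda(theta) is the unique l in (0,1/4)
   with theta_of_lambda l = theta (chosen by Hilbert's epsilon; existence and
   uniqueness are part of the paper's definition). For theta < 0 (outside the
   paper's domain) we arbitrarily set 1/4. *)
Definition lambda (t : R) : R :=
  match Rle_dec t 0 with
  | left _ => / 4
  | right _ =>
      epsilon (inhabits 0) (fun l => 0 < l < / 4 /\ theta_of_lambda l = t)
  end.

Definition f_fun (t : R) : R :=
  - ln (lambda t) - 2 * t - t * ln (1 - 4 * lambda t).

Definition j_fun (t : R) : R :=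
  - / 2 * ln (1 - 4 * (t + 1) * lambda t) + / 2 * ln 2.

(* Main.v *)
Require Import Defs.
From Stdlib Require Import Reals Lra ClassicalEpsilon Ranalysis5.
From Coquelicot Require Import Coquelicot.
Open Scope R_scope.


Definition Aa (s : R) : R := / 2 * ln ((1 + s) / (1 - s)).
Definition Dd (s : R) : R := s - Aa s * (1 - s * s).
Definition Tt (s : R) : R := -1 + artanh s / s.
Definition Gg (s : R) : R := s * s * (1 - s * s) / Dd s.

Lemma ratio_pos s : -1 < s < 1 -> 0 < (1 + s) * / (1 + - s).
Proof. intros; apply Rdiv_lt_0_compat; lra. Qed.

Ltac sc := repeat split; try (apply ratio_pos; lra); try lra; try nra.

Lemma Aa_deriv s : -1 < s < 1 -> is_derive Aa s (/ (1 - s * s)).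
Proof.
  intros H. unfold Aa. auto_derive; [sc|].
  unfold Rdiv, Rminus; generalize (ln ((1 + s) * / (1 + - s))); intro L; field; sc.
Qed.

Lemma Dd_deriv s : -1 < s < 1 -> is_derive Dd s (2 * s * Aa s).
Proof.
  intros H. unfold Dd, Aa. auto_derive; [sc|].
  unfold Rdiv, Rminus; generalize (ln ((1 + s) * / (1 + - s))); intro L; field; sc.
Qed.

Lemma Tt_deriv s : 0 < s < 1 -> is_derive Tt s (Dd s / (s * s * (1 - s * s))).
Proof.
  intros H. unfold Tt, artanh. auto_derive; [sc|].
  unfold Dd, Aa, Rdiv, Rminus; generalize (ln ((1 + s) * / (1 + - s))); intro L; field; sc.
Qed.

Lemma Tt_eq s : Tt s = -1 + Aa s / s.
Proof. reflexivity. Qed.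


Lemma Aa_pos s : 0 < s < 1 -> 0 < Aa s.
Proof.
  intros H. unfold Aa. pose proof ln_1.
  assert (ln 1 < ln ((1 + s) / (1 - s))).
  { apply ln_increasing; try lra. apply (Rmult_lt_reg_r (1 - s)); try lra.
    unfold Rdiv. rewrite Rmult_assoc, Rinv_l; lra. }
  lra.
Qed.

Lemma Aa_0 : Aa 0 = 0.
Proof. unfold Aa. replace ((1 + 0) / (1 - 0)) with 1 by field. rewrite ln_1. ring. Qed.

Lemma cont_of_der f df x : is_derive f x df -> continuity_pt f x.
Proof.
  intros H. apply continuity_pt_filterlim. apply (@ex_derive_continuous R_AbsRing R_NormedModule). exists df; exact H.
Qed.

Lemma Dd_nonneg s : 0 <= s < 1 -> 0 <= Dd s.
Proof.
  intros H. destruct (MVT_gen Dd 0 s (fun x => 2 * x * Aa x)) as [c [Hc Hm]].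
  - intros x Hx. rewrite Rmin_left in Hx by lra. rewrite Rmax_right in Hx by lra.
    apply Dd_deriv; lra.
  - intros x Hx. rewrite Rmin_left in Hx by lra. rewrite Rmax_right in Hx by lra.
    apply (cont_of_der _ (2 * x * Aa x)). apply Dd_deriv; lra.
  - rewrite Rmin_left in Hc by lra. rewrite Rmax_right in Hc by lra.
    assert (HD0 : Dd 0 = 0) by (unfold Dd; rewrite Aa_0; ring).
    rewrite HD0 in Hm.
    assert (0 <= Aa c).
    { destruct (Req_dec c 0) as [->|]; [rewrite Aa_0; lra|]. left; apply Aa_pos; lra. }
    assert (0 <= 2 * c * Aa c) by (apply Rmult_le_pos; lra).
    assert (0 <= 2 * c * Aa c * (s - 0)) by (apply Rmult_le_pos; lra).
    lra.
Qed.

Lemma Dd_incr x y : 0 < x -> x < y -> y < 1 -> Dd x < Dd y.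
Proof.
  intros Hx Hxy Hy.
  apply (incr_function Dd (Finite 0) (Finite 1) (fun x => 2 * x * Aa x)); simpl; auto.
  - intros z H1 H2. apply Dd_deriv; lra.
  - intros z H1 H2. assert (0 < Aa z) by (apply Aa_pos; lra). nra.
Qed.

Lemma Dd_pos s : 0 < s < 1 -> 0 < Dd s.
Proof.
  intros H. pose proof (Dd_nonneg (s/2)). assert (Dd (s/2) < Dd s) by (apply Dd_incr; lra).
  assert (0 <= Dd (s/2)) by (apply H0; lra). lra.
Qed.


Lemma Tt_incr x y : 0 < x -> x < y -> y < 1 -> Tt x < Tt y.
Proof.
  intros Hx Hxy Hy.
  apply (incr_function Tt (Finite 0) (Finite 1) (fun s => Dd s / (s * s * (1 - s * s)))); simpl; auto.
  - intros z H1 H2. apply Tt_deriv; lra.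
  - intros z H1 H2. apply Rdiv_lt_0_compat. apply Dd_pos; lra.
    apply Rmult_lt_0_compat. nra. nra.
Qed.

Lemma Tt_cont s : 0 < s < 1 -> continuity_pt Tt s.
Proof. intros H. eapply cont_of_der. apply Tt_deriv; exact H. Qed.

Lemma ln9_bounds : 2 <= ln 9 < 4.
Proof.
  assert (He1 : exp 1 <= 3) by apply exp_le_3.
  assert (He1' : 0 < exp 1) by apply exp_pos.
  assert (E2 : exp 2 = exp 1 * exp 1) by (rewrite <- exp_plus; f_equal; lra).
  assert (E4 : exp 4 = exp 2 * exp 2) by (rewrite <- exp_plus; f_equal; lra).
  assert (H2 : 1 + 2 < exp 2) by (apply exp_ineq1; lra).
  split.
  - rewrite <- (ln_exp 2). destruct (Req_dec (exp 2) 9) as [->|Hn]; [lra|].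
    left. apply ln_increasing. apply exp_pos. assert (exp 2 <= 9) by nra. lra.
  - rewrite <- (ln_exp 4). apply ln_increasing. lra. nra.
Qed.

Lemma Aa_45 : Aa (4/5) = / 2 * ln 9.
Proof. unfold Aa. f_equal. f_equal. field. Qed.

Definition Mm : R := Tt (4/5).

Lemma Mm_pos : 0 < Mm.
Proof.
  unfold Mm. rewrite Tt_eq. rewrite Aa_45. pose proof ln9_bounds. lra.
Qed.

Lemma Dd_lb s : 4/5 <= s < 1 -> 2/25 < Dd s.
Proof.
  intros H. assert (Dd (4/5) <= Dd s).
  { destruct (Req_dec s (4/5)) as [->|]; [lra|]. left; apply Dd_incr; lra. }
  assert (2/25 < Dd (4/5)).
  { unfold Dd. rewrite Aa_45. pose proof ln9_bounds. lra. }
  lra.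
Qed.

Lemma Aa_nonneg s : 0 <= s < 1 -> 0 <= Aa s.
Proof.
  intros H. destruct (Req_dec s 0) as [->|]. rewrite Aa_0; lra. left; apply Aa_pos; lra.
Qed.

Lemma Tt_ge s : 0 < s < 1 -> Aa s - 1 <= Tt s.
Proof.
  intros H. rewrite Tt_eq. assert (0 <= Aa s) by (apply Aa_nonneg; lra).
  assert (Aa s <= Aa s / s).
  { apply (Rmult_le_reg_r s); try lra. unfold Rdiv. rewrite Rmult_assoc, Rinv_l; nra. }
  lra.
Qed.

Lemma exists_pre x : Mm <= x -> exists s, 4/5 <= s < 1 /\ Tt s = x.
Proof.
  intros Hx. destruct (Req_dec x Mm) as [->|Hne].
  { exists (4/5). split. lra. reflexivity. }
  assert (HM := Mm_pos).
  set (e := exp (2 * x + 2)).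
  assert (He : 1 < e).
  { unfold e. pose proof (exp_ineq1 (2 * x + 2)). lra. }
  set (s1 := 1 - / (5 * e)).
  assert (Hs1 : 4/5 < s1 < 1).
  { unfold s1. assert (0 < / (5 * e)) by (apply Rinv_0_lt_compat; lra).
    assert (/ (5 * e) < / 5) by (apply Rinv_lt_contravar; nra). lra. }
  assert (HT1 : x < Tt s1).
  { apply Rlt_le_trans with (Aa s1 - 1); [|apply Tt_ge; lra].
    unfold Aa. replace ((1 + s1) / (1 - s1)) with (10 * e - 1) by (unfold s1; field; lra).
    assert (ln e < ln (10 * e - 1)) by (apply ln_increasing; lra).
    unfold e in H at 1. rewrite ln_exp in H. lra. }
  destruct (IVT_interv (fun s => Tt s - x) (4/5) s1) as [z [Hz1 Hz2]].
  - intros a Ha. apply continuity_pt_minus. apply Tt_cont; lra.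
    apply continuity_pt_const. intros u v; reflexivity.
  - lra.
  - simpl. fold Mm. lra.
  - simpl. lra.
  - exists z. split. lra. simpl in Hz2. lra.
Qed.

Definition Ss (t : R) : R := sqrt (1 - 4 * lambda t).

Lemma lambda_spec t : Mm <= t -> 0 < lambda t < / 4 /\ theta_of_lambda (lambda t) = t.
Proof.
  intros Ht. pose proof Mm_pos.
  unfold lambda. destruct (Rle_dec t 0) as [H0|H0]; [lra|].
  apply epsilon_spec.
  destruct (exists_pre t Ht) as [s [Hs HT]].
  exists ((1 - s * s) / 4). split. split; nra.
  change (Tt (sqrt (1 - 4 * ((1 - s * s) / 4))) = t).
  replace (1 - 4 * ((1 - s * s) / 4)) with (s * s) by field.
  rewrite sqrt_square by lra. exact HT.
Qed.

Lemma Ss_spec t : Mm <= t ->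
  4/5 <= Ss t < 1 /\ Tt (Ss t) = t /\ lambda t = (1 - Ss t * Ss t) / 4.
Proof.
  intros Ht. destruct (lambda_spec t Ht) as [Hl Hth].
  assert (Hu0 : 0 < Ss t) by (unfold Ss; apply sqrt_lt_R0; lra).
  assert (Hu1 : Ss t < 1).
  { unfold Ss. pose proof (sqrt_lt_1_alt (1 - 4 * lambda t) 1 ltac:(lra)) as Hq. rewrite sqrt_1 in Hq. exact Hq. }
  assert (HT : Tt (Ss t) = t) by exact Hth.
  assert (Hsq : Ss t * Ss t = 1 - 4 * lambda t) by (unfold Ss; apply sqrt_sqrt; lra).
  split; [|split; [exact HT| lra]].
  split; [|exact Hu1].
  destruct (Rlt_le_dec (Ss t) (4/5)) as [Hlt|]; [|assumption].
  exfalso. pose proof (Tt_incr (Ss t) (4/5) Hu0 Hlt ltac:(lra)). fold Mm in H. lra.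
Qed.


Lemma Ss_smono a b : Mm <= a -> a < b -> Ss a < Ss b.
Proof.
  intros Ha Hab. destruct (Ss_spec a Ha) as [Ha1 [Ha2 _]].
  destruct (Ss_spec b ltac:(lra)) as [Hb1 [Hb2 _]].
  destruct (Rlt_le_dec (Ss a) (Ss b)) as [|Hle]; auto.
  exfalso. destruct (Req_dec (Ss a) (Ss b)) as [He|Hne].
  - rewrite He in Ha2. lra.
  - pose proof (Tt_incr (Ss b) (Ss a) ltac:(lra) ltac:(lra) ltac:(lra)). lra.
Qed.

Lemma Ss_mono a b : Mm <= a -> a <= b -> Ss a <= Ss b.
Proof.
  intros Ha Hab. destruct (Req_dec a b) as [->|]; [lra|]. left; apply Ss_smono; lra.
Qed.

Lemma Ss_deriv x : Mm < x -> is_derive Ss x (Gg (Ss x)).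
Proof.
  intros Hx.
  assert (Prf : forall a, Ss Mm <= a <= Ss (x + 1) -> derivable_pt Tt a).
  { intros a Ha. destruct (Ss_spec Mm ltac:(lra)) as [H1 _].
    destruct (Ss_spec (x+1) ltac:(lra)) as [H2 _].
    exists (Dd a / (a * a * (1 - a * a))). apply is_derive_Reals. apply Tt_deriv. lra. }
  destruct (Ss_spec Mm ltac:(lra)) as [HM1 [HM2 _]].
  destruct (Ss_spec (x+1) ltac:(lra)) as [HX1 [HX2 _]].
  destruct (Ss_spec x ltac:(lra)) as [Hx1 [Hx2 _]].
  assert (Prg : continuity_pt Ss x).
  { apply (continuity_pt_recip_interv Tt Ss (Ss Mm) (Ss (x+1))).
    - apply Ss_smono; lra.
    - intros u v Hu Huv Hv. apply Tt_incr; lra.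
    - intros y Hy1 Hy2. rewrite HM2 in Hy1. unfold comp, id.
      destruct (Ss_spec y Hy1) as [_ [H _]]. exact H.
    - intros y Hy1 Hy2. rewrite HM2 in Hy1. rewrite HX2 in Hy2.
      split; apply Ss_mono; lra.
    - intros a Ha. apply Tt_cont. lra.
    - rewrite HM2, HX2. lra. }
  assert (Hin : Ss Mm <= Ss x <= Ss (x + 1)).
  { split; apply Ss_mono; lra. }
  pose proof (derivable_pt_lim_recip_interv Tt Ss Mm (x+1) x Prf Prg ltac:(lra) ltac:(lra) Hin) as Hd.
  assert (Hdv : derive_pt Tt (Ss x) (Prf (Ss x) Hin) = Dd (Ss x) / (Ss x * Ss x * (1 - Ss x * Ss x))).
  { apply derive_pt_eq_0. apply is_derive_Reals. apply Tt_deriv. lra. }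
  assert (HD : 0 < Dd (Ss x)) by (apply Dd_pos; lra).
  assert (0 < Ss x * Ss x * (1 - Ss x * Ss x)) by (apply Rmult_lt_0_compat; nra).
  rewrite Hdv in Hd.
  apply is_derive_Reals.
  replace (Gg (Ss x)) with (1 / (Dd (Ss x) / (Ss x * Ss x * (1 - Ss x * Ss x)))).
  - apply Hd.
    + intros y Hy. unfold comp, id. destruct (Ss_spec y ltac:(lra)) as [_ [Hq _]]. exact Hq.
    + apply Rgt_not_eq. apply Rdiv_lt_0_compat; lra.
  - unfold Gg. field. repeat split; try lra; nra.
Qed.

Lemma comp_deriv H H' t : Mm < t -> (forall s, 4/5 <= s < 1 -> is_derive H s (H' s)) ->
  is_derive (fun u => H (Ss u)) t (H' (Ss t) * Gg (Ss t)).
Proof.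
  intros Ht HH. destruct (Ss_spec t ltac:(lra)) as [Hs _].
  rewrite Rmult_comm. apply (is_derive_comp H Ss). apply HH; auto. apply Ss_deriv; auto.
Qed.



Lemma loc_ext (P : R -> Prop) t : Mm < t -> (forall u, Mm < u -> P u) -> locally t P.
Proof.
  intros Ht HP. apply (locally_interval P t (Finite Mm) p_infty); simpl; auto.
Qed.

Lemma step g n h h' t : Mm < t ->
  (forall u, Mm < u -> Derive_n g n u = h u) ->
  (forall u, Mm < u -> is_derive h u (h' u)) ->
  Derive_n g (S n) t = h' t /\ ex_derive_n g (S n) t.
Proof.
  intros Ht Hh Hd. simpl. split.
  - rewrite (Derive_ext_loc _ h). apply is_derive_unique. apply Hd; auto.
    apply loc_ext; auto.
  - apply (ex_derive_ext_loc h). apply loc_ext; auto. intros u Hu; symmetry; auto.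
    exists (h' t). apply Hd; auto.
Qed.

Definition Ff (s : R) : R := - ln ((1 - s * s) / 4) - 2 * Tt s - Tt s * ln (s * s).

Lemma Ff_deriv s : 0 < s < 1 -> is_derive Ff s (- (Dd s / (s * s * (1 - s * s))) * ln (s * s)).
Proof.
  intros H. unfold Ff, Tt, artanh. auto_derive; [sc|].
  unfold Dd, Aa, Rdiv, Rminus.
  generalize (ln ((1 + s) * / (1 + - s))); generalize (ln (s * s)); intros L1 L2.
  field. sc.
Qed.

Lemma f_eq t : Mm <= t -> f_fun t = Ff (Ss t).
Proof.
  intros Ht. destruct (Ss_spec t Ht) as [Hs [HT Hl]].
  unfold f_fun. 
  assert (H1 : 1 - 4 * lambda t = Ss t * Ss t) by (rewrite Hl; field).
  rewrite H1, Hl. unfold Ff. rewrite HT. reflexivity.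
Qed.

Definition f1 t := - ln (Ss t * Ss t).
Definition Pp (s : R) := -2 * s * (1 - s * s) / Dd s.
Definition Pp' (s : R) := -2 * ((1 - 3 * s * s) * Dd s - 2 * s * s * (1 - s * s) * Aa s) / (Dd s * Dd s).

Lemma f_d1 t : Mm < t -> is_derive f_fun t (f1 t).
Proof.
  intros Ht. apply (is_derive_ext_loc (fun u => Ff (Ss u))).
  - apply loc_ext; auto. intros u Hu. symmetry. apply f_eq; lra.
  - destruct (Ss_spec t ltac:(lra)) as [Hs _].
    assert (0 < Dd (Ss t)) by (apply Dd_pos; lra).
    replace (f1 t) with ((- (Dd (Ss t) / (Ss t * Ss t * (1 - Ss t * Ss t))) * ln (Ss t * Ss t)) * Gg (Ss t)).
    + apply (comp_deriv Ff (fun s => - (Dd s / (s * s * (1 - s * s))) * ln (s * s))); auto. intros s Hs'. apply Ff_deriv; lra.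
    + unfold f1, Gg. field. sc.
Qed.

Lemma f_d2 t : Mm < t -> is_derive f1 t (Pp (Ss t)).
Proof.
  intros Ht. destruct (Ss_spec t ltac:(lra)) as [Hs _].
  assert (0 < Dd (Ss t)) by (apply Dd_pos; lra).
  replace (Pp (Ss t)) with ((- (2 / Ss t)) * Gg (Ss t)).
  - unfold f1; apply (comp_deriv (fun s => - ln (s * s)) (fun s => - (2 / s))); auto. intros s Hs'.
    auto_derive; [sc|]. field. lra.
  - unfold Pp, Gg. field. sc.
Qed.

Lemma Pp_deriv s : 0 < s < 1 -> is_derive Pp s (Pp' s).
Proof.
  intros H. assert (0 < Dd s) by (apply Dd_pos; lra).
  unfold Pp, Pp'. revert H0. unfold Dd, Aa. intros H0.
  auto_derive.
  { unfold Rdiv, Rminus in *. repeat split; try (apply ratio_pos; lra); try lra. }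
  unfold Rdiv, Rminus in *.
  revert H0. generalize (ln ((1 + s) * / (1 + - s))). intros L H0.
  field. sc.
Qed.

Definition f3 t := Pp' (Ss t) * Gg (Ss t).

Lemma f_d3 t : Mm < t -> is_derive (fun u => Pp (Ss u)) t (f3 t).
Proof.
  intros Ht. apply (comp_deriv Pp Pp'); auto. intros s Hs. apply Pp_deriv; lra.
Qed.

Lemma f_final t : Mm < t -> ex_derive_n f_fun 3 t /\ Derive_n f_fun 3 t = f3 t.
Proof.
  intros Ht.
  assert (E1 : forall u, Mm < u -> Derive_n f_fun 1 u = f1 u).
  { intros u Hu. simpl. apply is_derive_unique. apply f_d1; auto. }
  assert (E2 : forall u, Mm < u -> Derive_n f_fun 2 u = Pp (Ss u)).
  { intros u Hu. apply (step f_fun 1 f1 (fun u => Pp (Ss u)) u Hu E1 f_d2). }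
  destruct (step f_fun 2 (fun u => Pp (Ss u)) f3 t Ht E2 f_d3). auto.
Qed.


Definition Jj (s : R) : R := - / 2 * ln (Dd s / s) + / 2 * ln 2.
Definition Jj' (s : R) : R := - / 2 * (2 * s * Aa s / Dd s - / s).

Lemma Jj_deriv s : 0 < s < 1 -> is_derive Jj s (Jj' s).
Proof.
  intros H. assert (0 < Dd s) by (apply Dd_pos; lra).
  assert (0 < Dd s / s) by (apply Rdiv_lt_0_compat; lra).
  unfold Jj, Jj'. revert H0 H1. unfold Dd, Aa. intros H0 H1.
  auto_derive.
  { unfold Rdiv, Rminus in *. repeat split; try (apply ratio_pos; lra); try lra. }
  unfold Rdiv, Rminus in *.
  revert H0 H1. generalize (ln ((1 + s) * / (1 + - s))). intros L H0 H1.
  field. sc.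
Qed.

Lemma j_eq t : Mm <= t -> j_fun t = Jj (Ss t).
Proof.
  intros Ht. destruct (Ss_spec t Ht) as [Hs [HT Hl]].
  unfold j_fun, Jj. rewrite Hl. rewrite <- HT at 1.
  f_equal. f_equal. f_equal. unfold Dd, Tt, artanh, Aa. field. lra.
Qed.

Definition Nn (s : R) := s * (1 - s * s) * (2 * Aa s * s * s - Dd s).
Definition Nn' (s : R) := (1 - 3 * s * s) * (2 * Aa s * s * s - Dd s) + 2 * s * s * s + 2 * Aa s * s * s * (1 - s * s).
Definition J1 (s : R) := - Nn s / (2 * (Dd s * Dd s)).
Definition J1' (s : R) := - (Nn' s * Dd s - 4 * s * Aa s * Nn s) / (2 * (Dd s * Dd s * Dd s)).

Definition j1 t := J1 (Ss t).

Lemma j_d1 t : Mm < t -> is_derive j_fun t (j1 t).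
Proof.
  intros Ht. apply (is_derive_ext_loc (fun u => Jj (Ss u))).
  - apply loc_ext; auto. intros u Hu. symmetry. apply j_eq; lra.
  - destruct (Ss_spec t ltac:(lra)) as [Hs _].
    assert (0 < Dd (Ss t)) by (apply Dd_pos; lra).
    replace (j1 t) with (Jj' (Ss t) * Gg (Ss t)).
    + apply (comp_deriv Jj Jj'); auto. intros s Hs'. apply Jj_deriv; lra.
    + unfold j1, J1, Nn, Jj', Gg. field. sc.
Qed.

Lemma J1_deriv s : 0 < s < 1 -> is_derive J1 s (J1' s).
Proof.
  intros H. assert (0 < Dd s) by (apply Dd_pos; lra).
  unfold J1, J1', Nn, Nn'. revert H0. unfold Dd, Aa. intros H0.
  auto_derive.
  { unfold Rdiv, Rminus in *. repeat split; try (apply ratio_pos; lra); try nra. }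
  unfold Rdiv, Rminus in *.
  revert H0. generalize (ln ((1 + s) * / (1 + - s))). intros L H0.
  field. sc.
Qed.

Definition j2 t := J1' (Ss t) * Gg (Ss t).

Lemma j_d2 t : Mm < t -> is_derive j1 t (j2 t).
Proof.
  intros Ht. unfold j1. apply (comp_deriv J1 J1'); auto. intros s Hs. apply J1_deriv; lra.
Qed.

Lemma j_final t : Mm < t -> ex_derive_n j_fun 2 t /\ Derive_n j_fun 2 t = j2 t.
Proof.
  intros Ht.
  assert (E1 : forall u, Mm < u -> Derive_n j_fun 1 u = j1 u).
  { intros u Hu. simpl. apply is_derive_unique. apply j_d1; auto. }
  destruct (step j_fun 1 j1 j2 t Ht E1 j_d2). auto.
Qed.


Lemma absM x y bx by' : Rabs x <= bx -> Rabs y <= by' -> Rabs (x * y) <= bx * by'.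
Proof.
  intros H1 H2. rewrite Rabs_mult. apply Rmult_le_compat; auto; apply Rabs_pos.
Qed.

Lemma absP x y bx by' : Rabs x <= bx -> Rabs y <= by' -> Rabs (x + y) <= bx + by'.
Proof. intros H1 H2. eapply Rle_trans. apply Rabs_triang. lra. Qed.

Lemma absB x y bx by' : Rabs x <= bx -> Rabs y <= by' -> Rabs (x - y) <= bx + by'.
Proof. intros H1 H2. unfold Rminus. apply absP; auto. rewrite Rabs_Ropp; auto. Qed.

Lemma absC x b : 0 <= x <= b -> Rabs x <= b.
Proof. intros H. apply Rabs_le. lra. Qed.


Lemma facts s (Hs : 4/5 <= s < 1) : 0 <= Aa s /\ Aa s * (1 - s * s) <= 1 /\ 2/25 < Dd s /\ Dd s <= 1 /\ Dd s = s - Aa s * (1 - s * s).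
Proof.
  set (a := Aa s). set (D := Dd s).
  assert (0 <= a) by (apply Aa_nonneg; lra).
  assert (2/25 < D) by (apply Dd_lb; lra).
  assert (HD : D = s - a * (1 - s * s)) by reflexivity.
  assert (0 <= a * (1 - s * s)) by (apply Rmult_le_pos; nra).
  repeat split; try lra.
Qed.

Lemma bound_f3 s (Hs : 4/5 <= s < 1) : Rabs (Pp' s * Gg s) <= 8 * (25/2) ^ 3 * ((1 + Aa s) * (1 - s * s)).
Proof.
  destruct (facts s Hs) as [Ha [Hap [HD1 [HD2 HD]]]]. set (a := Aa s) in *. set (D := Dd s) in *.
  
  set (u := / D).
  assert (Hu : 0 < u <= 25/2).
  { unfold u. split. apply Rinv_0_lt_compat; lra.
    rewrite <- (Rinv_inv (25/2)). apply Rinv_le_contravar; lra. }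
  set (X := (1 - 3 * s * s) * D - 2 * s * s * ((1 - s * s) * a)).
  assert (HX : Rabs X <= 2 * 1 + 2 * 1 * 1).
  { unfold X. apply absB. apply absM. apply Rabs_le; nra. apply absC; lra.
    apply absM. apply absC; nra. apply absC; split. apply Rmult_le_pos; nra. lra. }
  assert (E : Pp' s * Gg s = X * (-2 * (s * s * (1 - s * s) * (u * u * u)))).
  { unfold Pp', Gg, X, u. fold D a. field. lra. }
  rewrite E.
  assert (Hu3 : 0 < u * u * u) by (repeat apply Rmult_lt_0_compat; lra).
  assert (Hu3' : u * u * u <= (25/2)^3).
  { simpl. rewrite Rmult_1_r. rewrite <- Rmult_assoc. apply Rmult_le_compat; try nra. }
  assert (Hp : 0 <= 1 - s * s) by nra.
  assert (HW0 : 0 <= s * s * (1 - s * s) * (u * u * u)).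
  { apply Rmult_le_pos. apply Rmult_le_pos; nra. lra. }
  assert (HW1 : s * s * (1 - s * s) * (u * u * u) <= 1 * (1 - s * s) * (25/2)^3).
  { apply Rmult_le_compat; try lra. apply Rmult_le_pos; nra. apply Rmult_le_compat; nra. }
  assert (HW : Rabs (-2 * (s * s * (1 - s * s) * (u * u * u))) <= 2 * ((1 - s * s) * (25/2)^3)).
  { rewrite Rabs_mult. rewrite Rabs_left by lra. rewrite (Rabs_pos_eq _ HW0). lra. }
  eapply Rle_trans. apply absM. exact HX. exact HW.
  assert (0 <= 1 - s * s) by nra.
  assert (0 <= (1 - s * s) * a) by (apply Rmult_le_pos; lra).
  assert (0 < (25/2)^3) by (simpl; lra).
  assert (0 <= (25/2)^3 * (a * (1 - s * s))) by (apply Rmult_le_pos; lra).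
  nra.
Qed.


Lemma bound_j2 s (Hs : 4/5 <= s < 1) : Rabs (J1' s * Gg s) <= 6 * (25/2) ^ 4 * ((1 + Aa s) * (1 - s * s)).
Proof.
  destruct (facts s Hs) as [Ha [Hap [HD1 [HD2 HD]]]]. set (a := Aa s) in *. set (D := Dd s) in *.
  
  set (u := / D).
  assert (Hu : 0 < u <= 25/2).
  { unfold u. split. apply Rinv_0_lt_compat; lra.
    rewrite <- (Rinv_inv (25/2)). apply Rinv_le_contravar; lra. }
  assert (Hp : 0 <= 1 - s * s) by nra.
  assert (Hap0 : 0 <= a * (1 - s * s)) by (apply Rmult_le_pos; lra).
  assert (Hq : Rabs (2 * a * s * s - D) <= 2 * a + 1).
  { assert (0 <= a * (s * s)) by (apply Rmult_le_pos; nra).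
    assert (a * (s * s) <= a) by nra.
    apply Rabs_le. split; nra. }
  set (Y := ((1 - 3 * s * s) * (2 * a * s * s - D) + 2 * s * s * s + 2 * s * s * (a * (1 - s * s))) * D
            - 4 * s * s * (a * (1 - s * s)) * (2 * a * s * s - D)).
  assert (HY : Rabs Y <= (2 * (2 * a + 1) + 2 + 2 * 1 * 1) * 1 + 4 * 1 * (2 * a + 1)).
  { unfold Y. apply absB. apply absM. apply absP. apply absP.
    apply absM. apply Rabs_le; nra. exact Hq.
    apply absC; split; nra.
    apply absM. apply absC; split; nra. apply absC; lra.
    apply absC; lra.
    apply absM. apply absM. apply absC; split; nra. apply absC; lra. exact Hq. }
  assert (E : J1' s * Gg s = Y * (- (s * s * (1 - s * s) * (u * u * u * u)) / 2)).
  { unfold J1', Gg, Nn, Nn', Y, u. fold D a. field. lra. }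
  rewrite E.
  assert (Hu4 : 0 < u * u * u * u) by (repeat apply Rmult_lt_0_compat; lra).
  assert (Hu4' : u * u * u * u <= (25/2)^4).
  { simpl. rewrite Rmult_1_r. rewrite <- !Rmult_assoc. apply Rmult_le_compat; try nra.
    all: try (apply Rmult_le_compat; nra). }
  assert (HW0 : 0 <= s * s * (1 - s * s) * (u * u * u * u)).
  { apply Rmult_le_pos. apply Rmult_le_pos; nra. lra. }
  assert (HW1 : s * s * (1 - s * s) * (u * u * u * u) <= 1 * (1 - s * s) * (25/2)^4).
  { apply Rmult_le_compat; try lra. all: try (apply Rmult_le_pos; nra); try (apply Rmult_le_compat; nra). }
  assert (HW : Rabs (- (s * s * (1 - s * s) * (u * u * u * u)) / 2) <= (1 - s * s) * (25/2)^4 / 2).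
  { unfold Rdiv. rewrite Rabs_mult. rewrite Rabs_Ropp. rewrite (Rabs_pos_eq _ HW0).
    rewrite Rabs_pos_eq by lra. lra. }
  eapply Rle_trans. apply absM. exact HY. exact HW.
  assert (0 < (25/2)^4) by (simpl; lra).
  assert (0 <= (25/2)^4 * (a * (1 - s * s))) by (apply Rmult_le_pos; lra).
  assert (0 <= (25/2)^4 * (1 - s * s)) by (apply Rmult_le_pos; lra).
  nra.
Qed.




Lemma exp_bound al s : 0 < al < 2 -> 4/5 <= s < 1 ->
  (1 + Aa s) * (1 - s * s) <= 4 * exp 2 * (1 + / (2 - al)) * exp (- al * Tt s).
Proof.
  intros Hal Hs.
  destruct (facts s Hs) as [Ha [Hap [HD1 [HD2 HD]]]].
  set (a := Aa s) in *.
  set (b := 2 - al).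
  assert (Hb : 0 < b) by (unfold b; lra).
  set (E := exp (al * a / s)).
  assert (HE : 0 < E) by apply exp_pos.
  assert (H1 : a / s - a <= 1).
  { assert (a * (1 - s) <= s).
    { assert (a * (1 - s) <= a * (1 - s * s)) by (apply Rmult_le_compat_l; nra). lra. }
    apply (Rmult_le_reg_r s); try lra. unfold Rdiv. rewrite Rmult_minus_distr_r, Rmult_assoc, Rinv_l; lra. }
  assert (H2 : E <= exp (al * a) * exp 2).
  { rewrite <- exp_plus. unfold E.
    destruct (Req_dec (al * a / s) (al * a + 2)) as [->|]; [lra|]. left. apply exp_increasing.
    assert (al * (a / s - a) <= al * 1) by (apply Rmult_le_compat_l; lra).
    unfold Rdiv in *. lra. }
  assert (H3 : exp (2 * a) = (1 + s) / (1 - s)).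
  { unfold a, Aa. replace (2 * (/ 2 * ln ((1 + s) / (1 - s)))) with (ln ((1 + s) / (1 - s))) by field.
    apply exp_ln. apply Rdiv_lt_0_compat; lra. }
  assert (H4 : (1 + a) * exp (al * a) <= (1 + / b) * exp (2 * a)).
  { replace (2 * a) with (al * a + b * a) by (unfold b; ring). rewrite exp_plus.
    pose proof (exp_ineq1_le (b * a)).
    assert (1 + a <= (1 + / b) * (1 + b * a)).
    { assert (/ b * (b * a) = a) by (field; lra).
      assert (0 <= b * a) by (apply Rmult_le_pos; lra).
      assert (0 < / b) by (apply Rinv_0_lt_compat; lra). nra. }
    assert (0 < exp (al * a)) by apply exp_pos.
    assert (0 < 1 + / b) by (assert (0 < / b) by (apply Rinv_0_lt_compat; lra); lra).
    apply Rle_trans with ((1 + / b) * (1 + b * a) * exp (al * a)).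
    apply Rmult_le_compat_r; lra.
    replace ((1 + / b) * (1 + b * a) * exp (al * a)) with (((1 + / b) * exp (al * a)) * (1 + b * a)) by ring.
    replace ((1 + / b) * (exp (al * a) * exp (b * a))) with (((1 + / b) * exp (al * a)) * exp (b * a)) by ring.
    apply Rmult_le_compat_l; auto. apply Rmult_le_pos; lra. }
  assert (H5 : (1 + a) * (1 - s * s) * E <= 4 * exp 2 * (1 + / b)).
  { assert (Hp : 0 <= 1 - s * s) by nra.
    assert (0 <= (1 + a) * (1 - s * s)) by (apply Rmult_le_pos; lra).
    apply Rle_trans with ((1 + a) * (1 - s * s) * (exp (al * a) * exp 2)).
    apply Rmult_le_compat_l; auto.
    replace ((1 + a) * (1 - s * s) * (exp (al * a) * exp 2)) with
      (((1 + a) * exp (al * a)) * ((1 - s * s) * exp 2)) by ring.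
    assert (0 < exp 2) by apply exp_pos.
    apply Rle_trans with ((1 + / b) * exp (2 * a) * ((1 - s * s) * exp 2)).
    apply Rmult_le_compat_r; [apply Rmult_le_pos; lra | exact H4].
    rewrite H3.
    replace ((1 + / b) * ((1 + s) / (1 - s)) * ((1 - s * s) * exp 2)) with
      ((1 + s) * (1 + s) * (exp 2 * (1 + / b))) by (field; lra).
    assert (0 < / b) by (apply Rinv_0_lt_compat; lra).
    assert (0 < exp 2 * (1 + / b)) by (apply Rmult_lt_0_compat; lra).
    nra. }
  assert (H6 : exp (- al * Tt s) = exp al * / E).
  { rewrite Tt_eq. unfold E. rewrite <- exp_Ropp, <- exp_plus. f_equal. fold a. unfold Rdiv. ring. }
  rewrite H6.
  assert (H7 : 1 <= exp al) by (pose proof (exp_ineq1_le al); lra).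
  assert (0 < / E) by (apply Rinv_0_lt_compat; lra).
  assert (H8 : (1 + a) * (1 - s * s) <= 4 * exp 2 * (1 + / b) * / E).
  { apply (Rmult_le_reg_r E); auto. replace (4 * exp 2 * (1 + / b) * / E * E) with (4 * exp 2 * (1 + / b)) by (field; lra). lra. }
  assert (0 <= 4 * exp 2 * (1 + / b) * / E).
  { assert (0 < exp 2) by apply exp_pos. assert (0 < / b) by (apply Rinv_0_lt_compat; lra).
    apply Rmult_le_pos; [|lra]. apply Rmult_le_pos; lra. }
  nra.
Qed.


Theorem proposition6 :
  forall a : R, 0 < a < 2 ->
    (exists C M : R, forall t : R, M < t ->
        ex_derive_n f_fun 3 t /\ Rabs (Derive_n f_fun 3 t) <= C * exp (- a * t)) /\
    (exists C M : R, forall t : R, M < t ->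
        ex_derive_n j_fun 2 t /\ Rabs (Derive_n j_fun 2 t) <= C * exp (- a * t)).
Proof.
  intros al Hal.
  assert (HK : forall t, Mm < t -> (1 + Aa (Ss t)) * (1 - Ss t * Ss t) <= 4 * exp 2 * (1 + / (2 - al)) * exp (- al * t)).
  { intros t Ht. destruct (Ss_spec t ltac:(lra)) as [Hs [HT _]].
    pose proof (exp_bound al (Ss t) Hal Hs) as H. rewrite HT in H. exact H. }
  split.
  - exists (8 * (25/2) ^ 3 * (4 * exp 2 * (1 + / (2 - al)))), Mm. intros t Ht.
    destruct (f_final t Ht) as [Hex Heq]. split; auto.
    rewrite Heq. unfold f3. destruct (Ss_spec t ltac:(lra)) as [Hs _].
    eapply Rle_trans. apply bound_f3; auto.
    rewrite (Rmult_assoc (_ * (25/2)^_)). apply Rmult_le_compat_l. simpl; lra. apply HK; auto.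
  - exists (6 * (25/2) ^ 4 * (4 * exp 2 * (1 + / (2 - al)))), Mm. intros t Ht.
    destruct (j_final t Ht) as [Hex Heq]. split; auto.
    rewrite Heq. unfold j2. destruct (Ss_spec t ltac:(lra)) as [Hs _].
    eapply Rle_trans. apply bound_j2; auto.
    rewrite (Rmult_assoc (_ * (25/2)^_)). apply Rmult_le_compat_l. simpl; lra. apply HK; auto.
Qed.
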